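(* Let $X$ be a Banach space and let $u=\sum_{\alpha\in\mathcal{J}}u_\alpha\xi_\alpha$ belong either to $L_{2,Q}(\mathbb{W};X)$ for some sequence $Q$ of positive numbers, or to $\bigcup_{\gamma\ge0}(\mathcal{S})_{-\rho,-\gamma}(X)$ for some $0\le\rho\le1$. Then for every $\alpha\in\mathcal{J}$, $$u_\alpha=\frac{1}{\sqrt{\alpha!}}\left.\Big(\prod_{i,k}\frac{\partial^{\alpha_i^k}}{\partial h_{k,i}^{\alpha_i^k}}\Big)Su(h)\right|_{h=0}.$$
   Context: $\mathcal{J}$: multi-indices $\alpha=(\alpha_i^k)_{i,k\ge1}$ of nonnegative integers with finitely many nonzero entries; $\alpha!=\prod\alpha_i^k!$; $\{\xi_\alpha\}$ the Cameron–Martin basis (built from independent Wiener processes $w_k$ and an orthonormal basis $\{m_i\}$ of $L_2((0,T))$). For $Q=\{q_k\}$ positive, $q^\alpha=\prod q_k^{\alpha_i^k}$ and $L_{2,Q}(\mathbb{W};X)$ is the set of formal series $\sum u_\alpha\xi_\alpha$, $u_\alpha\in X$, with $\sum q^{2\alpha}\|u_\alpha\|_X^2<\infty$; $(\mathcal{S})_{-\rho,-\gamma}(X)$ is the set with $\sum_\alpha(\alpha!)^{-\rho}\prod_{i,k}(2ik)^{-\gamma\alpha_i^k}\|u_\alpha\|_X^2<\infty$. For $h=\sum_{i,k}h_{k,i}m_iy_k$ with finitely many nonzero real $h_{k,i}$, set $h^\alpha=\prod h_{k,i}^{\alpha_i^k}$; the S-transform is $Su(h)=\sum_\alpha u_\alpha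 h^\alpha/\sqrt{\alpha!}\in X$ (defined wherever the series converges), viewed as a function of the variables $h_{k,i}$. *)

(* Defs.v *)
From HB Require Import structures.
From mathcomp Require Import all_boot all_order all_algebra finmap.
From mathcomp Require Import all_classical all_reals all_analysis.
Set Implicit Arguments. Unset Strict Implicit. Unset Printing Implicit Defensive.
Import Order.TTheory GRing.Theory Num.Theory.
Import numFieldNormedType.Exports.
Local Open Scope classical_set_scope.
Local Open Scope ring_scope.

(* The pair (i,k) : nat * nat encodes the paper's indices (i+1, k+1)
   (i indexes the basis m_i of L_2((0,T)), k indexes the Wiener process w_k). *)
Definition mindex := {fsfun nat * nat -> nat with 0%N}.

Definition mfact (a : mindex) : nat := (\prod_(p <- finsupp a) (a p)`!)%N.

Definition qpow {R : realType} (q : nat -> R) (a : mindex) : R :=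
  \prod_(p <- finsupp a) q p.2 ^+ a p.

(* h^alpha = prod_{i,k} h_{k,i}^{alpha_i^k}; the variable h_{k,i} is h (i,k). *)
Definition hpow {R : realType} (h : nat * nat -> R) (a : mindex) : R :=
  \prod_(p <- finsupp a) h p ^+ a p.

Definition Sweight {R : realType} (gamma : R) (a : mindex) : R :=
  \prod_(p <- finsupp a)
     (((2 * p.1.+1 * p.2.+1)%:R : R) `^ (- gamma)) ^+ a p.

Definition in_L2Q {R : realType} {X : normedModType R}
  (q : nat -> R) (u : mindex -> X) : Prop :=
  (\esum_(a in [set: mindex]) ((qpow q a) ^+ 2 * `|u a| ^+ 2)%:E < +oo)%E.

Definition in_S {R : realType} {X : normedModType R}
  (rho gamma : R) (u : mindex -> X) : Prop :=
  (\esum_(a in [set: mindex])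
     (((mfact a)%:R : R) `^ (- rho) * Sweight gamma a * `|u a| ^+ 2)%:E < +oo)%E.

(* Unconditional summation of a family indexed by a choiceType: limit of the
   finite partial sums along the filter of finite subsets ordered by inclusion. *)
Definition totally {I : choiceType} : set_system {fset I} :=
  filter_from setT (fun A => [set B | (A `<=` B)%fset]).

Definition partial_sum {I : choiceType} {V : zmodType}
  (x : I -> V) (A : {fset I}) : V := \sum_(i : A) x (val i).

Definition fam_sum {R : realType} {V : normedModType R} {I : choiceType}
  (x : I -> V) : V := lim (partial_sum x @ totally).

Definition Strans {R : realType} {X : normedModType R}
  (u : mindex -> X) (h : nat * nat -> R) : X :=
  fam_sum (fun a : mindex =>
    (hpow h a / Num.sqrt ((mfact a)%:R)) *: u a).

Definition dpartial {R : realType} {X : normedModType R} (p : nat * nat)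
  (F : (nat * nat -> R) -> X) : (nat * nat -> R) -> X :=
  fun h => derive1 (fun t : R => F (fun r => h r + (if r == p then t else 0))) 0.

Definition Dalpha {R : realType} {X : normedModType R} (a : mindex)
  (F : (nat * nat -> R) -> X) : (nat * nat -> R) -> X :=
  foldr (fun p G => iter (a p) (dpartial p) G) F (finsupp a).

(* Main.v *)
Require Import Defs.
From HB Require Import structures.
From mathcomp Require Import all_boot all_order all_algebra finmap.
From mathcomp Require Import all_classical all_reals all_analysis.
From mathcomp Require Import ring lra zify.
Import Order.TTheory GRing.Theory Num.Theory.
Import numFieldNormedType.Exports.
Local Open Scope ring_scope.

Module Helpers.
Set Implicit Arguments. Unset Strict Implicit. Unset Printing Implicit Defensive.
Local Open Scope classical_set_scope.

Lemma bin_le_exp2 n k : ('C(n, k) <= 2 ^ n)%N.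
Proof.
elim: n k => [|n IH] [|k] //; first by rewrite bin0 expn_gt0.
by rewrite binS expnS mul2n -addnn leq_add.
Qed.

Lemma ffact_le n k : (n ^_ k <= k`! * 2 ^ n)%N.
Proof. by rewrite -bin_ffact mulnC leq_mul2l bin_le_exp2 orbT. Qed.

Section Coord.
Variable R : realFieldType.
Lemma subr_ge0_2 (x y : R) : x <= y -> 0 <= y - x.
Proof. by rewrite subr_ge0. Qed.

Definition phi (k n : nat) (x : R) : R := (n ^_ k)%:R * x ^+ (n - k).

Lemma phi_bound (r : R) k n x : 0 < r -> `|x| <= r / 2 ->
  `|phi k n x| <= (k`!)%:R * (2 / r) ^+ k * r ^+ n.
Proof.
move=> r0 hx; rewrite /phi normrM normr_nat normrX.
have [kn|nk] := leqP k n; last first.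
  rewrite ffact_small //. rewrite mul0r. apply: mulr_ge0.
    by apply: mulr_ge0; rewrite ?ler0n // exprn_ge0 // divr_ge0 // ltW.
  by rewrite exprn_ge0 // ltW.
have r2 : 0 <= r / 2 by lra.
have e1 : `|x| ^+ (n - k) <= (r / 2) ^+ (n - k).
  by apply: lerXn2r; rewrite // nnegrE.
have e2 : (r / 2) ^+ (n - k) = (r / 2) ^+ n * (2 / r) ^+ k.
  have -> : (r / 2) ^+ n = (r / 2) ^+ (n - k) * (r / 2) ^+ k by rewrite -exprD subnK.
  rewrite -mulrA -exprMn.
  have -> : r / 2 * (2 / r) = 1 by field; rewrite gt_eqF.
  by rewrite expr1n mulr1.
apply: (le_trans (ler_wpM2l (ler0n _ _) e1)); rewrite e2.
have e3 : ((n ^_ k)%:R : R) <= (k`!)%:R * 2 ^+ n.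
  by rewrite -natrX -natrM ler_nat ffact_le.
have r0' : 0 <= r by exact: ltW.
have q1 : 0 <= (2 / r) ^+ k by rewrite exprn_ge0 // divr_ge0.
have q2 : 0 <= (r / 2) ^+ n by rewrite exprn_ge0.
rewrite mulrA; apply: (le_trans (ler_wpM2r q1 (ler_wpM2r q2 e3))).
rewrite expr_div_n.
have h2 : (2 : R) ^+ n != 0 by rewrite expf_neq0 // pnatr_eq0.
rewrite le_eqVlt; apply/orP; left; apply/eqP; field; exact: h2.
Qed.

Lemma taylor2 m (x s Rr : R) : 0 <= Rr -> `|x| <= Rr -> `|s| <= Rr ->
  Rr ^+ 2 * `|(x + s) ^+ m - x ^+ m - s * m%:R * x ^+ m.-1|
    <= s ^+ 2 * (m ^ 2)%:R * (2 * Rr) ^+ m.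
Proof.
move=> R0 hx hs; elim: m => [|m IH].
  rewrite !expr0 subrr sub0r mulr0 normrN mul0r normr0 mulr0.
  by apply: mulr_ge0 => //; apply: mulr_ge0; rewrite ?sqr_ge0 ?ler0n.
have rec : (x + s) ^+ m.+1 - x ^+ m.+1 - s * m.+1%:R * x ^+ m =
   (x + s) * ((x + s) ^+ m - x ^+ m - s * m%:R * x ^+ m.-1) + s ^+ 2 * m%:R * x ^+ m.-1.
  case: m {IH} => [|m]; first by rewrite /= !expr0 !expr1; ring.
  rewrite /= !exprS; ring.
rewrite rec /=.
set E := (_ - _ - _ : R).
have hxs : `|x + s| <= 2 * Rr by rewrite (le_trans (ler_normD _ _)) //; lra.
have hxm : m%:R * (`|x| ^+ m.-1 * Rr ^+ 2) <= m%:R * (2 * Rr) ^+ m.+1.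
  case: m {rec E IH} => [|m] /=; first by rewrite !mul0r.
  apply: ler_wpM2l => //.
  have hm : `|x| ^+ m <= Rr ^+ m by apply: lerXn2r; rewrite // nnegrE.
  have -> : (2 * Rr) ^+ m.+2 = 2 ^+ m.+2 * (Rr ^+ m * Rr ^+ 2).
    by rewrite exprMn -exprD addn2.
  apply: (le_trans (ler_wpM2r (exprn_ge0 _ R0) hm)) => //.
  rewrite -[X in X <= _]mul1r ler_wpM2r ?mulr_ge0 ?exprn_ge0 //.
  by rewrite exprn_ege1 // ler1n.
apply: (le_trans (ler_wpM2l (exprn_ge0 _ R0) (ler_normD _ _))).
rewrite mulrDr normrM.
have t1 : Rr ^+ 2 * (`|x + s| * `|E|) <= 2 * Rr * (s ^+ 2 * (m ^ 2)%:R * (2 * Rr) ^+ m).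
  rewrite mulrCA; apply: (le_trans (ler_wpM2l (normr_ge0 (x + s)) IH)).
  apply: ler_wpM2r => //; apply: mulr_ge0; last by rewrite exprn_ge0 // mulr_ge0.
  by apply: mulr_ge0; rewrite ?sqr_ge0 ?ler0n.
have t2 : Rr ^+ 2 * `|s ^+ 2 * m%:R * x ^+ m.-1| <= s ^+ 2 * m%:R * (2 * Rr) ^+ m.+1.
  rewrite normrM [X in _ * (X * _) <= _]normrM normr_nat (ger0_norm (sqr_ge0 s)) normrX.
  have q0 : 0 <= s ^+ 2 by rewrite sqr_ge0.
  move: hxm q0; set A := `|x| ^+ m.-1; set B := (2 * Rr) ^+ m.+1; set c := (m%:R : R).
  set q := s ^+ 2; move=> hxm q0.
  have := ler_wpM2l q0 hxm; rewrite !mulrA.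
  rewrite /q; nra.
apply: (le_trans (lerD t1 t2)).
rewrite [(2 * Rr) ^+ m.+1]exprS.
have hm : ((m ^ 2)%:R + m%:R : R) <= (m.+1 ^ 2)%:R by rewrite -natrD ler_nat; lia.
have P0 : 0 <= 2 * Rr * (2 * Rr) ^+ m by rewrite mulr_ge0 ?exprn_ge0 ?mulr_ge0.
have q0 : 0 <= s ^+ 2 by rewrite sqr_ge0.
have := mulr_ge0 (mulr_ge0 q0 P0) (subr_ge0_2 hm).
move: P0 q0 hm; set P := (2 * Rr) ^+ m; set a := ((m ^ 2)%:R : R); set b := (m%:R : R).
set c := ((m.+1 ^ 2)%:R : R); set q := s ^+ 2; move=> *; nra.
Qed.

Lemma sq_le_4exp m : (m ^ 2 <= 4 ^ m)%N.
Proof.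
have h : (m <= 2 ^ m)%N by apply: ltnW; rewrite ltn_expl.
by rewrite (_ : 4 = 2 ^ 2)%N // -expnM mulnC expnM leq_exp2r.
Qed.

Lemma phi_rem (r : R) k n x s : 0 < r -> `|x| <= r / 16 -> `|s| <= r / 16 ->
  `|phi k n (x + s) - phi k n x - s * phi k.+1 n x|
    <= s ^+ 2 * (16 / r) ^+ 2 * ((k`!)%:R * (2 / r) ^+ k * r ^+ n).
Proof.
move=> r0 hx hs.
set m := (n - k)%N.
set E := (x + s) ^+ m - x ^+ m - s * m%:R * x ^+ m.-1.
have eq1 : phi k n (x + s) - phi k n x - s * phi k.+1 n x = (n ^_ k)%:R * E.
  by rewrite /phi /E ffactnSr natrM subnS -/m; ring.
have R0 : 0 <= r / 16 by lra.
have hE := taylor2 m R0 hx hs.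
have m4 : ((m ^ 2)%:R : R) * (2 * (r / 16)) ^+ m <= (r / 2) ^+ m.
  have -> : r / 2 = 4 * (2 * (r / 16)) by field.
  rewrite [(4 * _) ^+ m]exprMn; apply: ler_wpM2r; first by rewrite exprn_ge0 //; lra.
  by rewrite -natrX ler_nat sq_le_4exp.
have q0 : 0 <= s ^+ 2 by rewrite sqr_ge0.
have hE' : `|E| <= s ^+ 2 * (16 / r) ^+ 2 * (r / 2) ^+ m.
  have -> : `|E| = (16 / r) ^+ 2 * ((r / 16) ^+ 2 * `|E|).
    by field; rewrite gt_eqF.
  have -> : s ^+ 2 * (16 / r) ^+ 2 * (r / 2) ^+ m = (16 / r) ^+ 2 * (s ^+ 2 * (r / 2) ^+ m) by ring.
  apply: ler_wpM2l; first by rewrite exprn_ge0 // divr_ge0 // ltW.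
  apply: (le_trans hE); rewrite -mulrA; exact: ler_wpM2l.
have hb := phi_bound k n (x := r / 2) r0.
have r2 : `|r / 2| <= r / 2 by rewrite ger0_norm //; lra.
move: (hb r2); rewrite ger0_norm; last first.
  by rewrite /phi mulr_ge0 ?ler0n // exprn_ge0 //; lra.
rewrite /phi -/m => hb'.
rewrite eq1 normrM normr_nat.
apply: (le_trans (ler_wpM2l (ler0n _ _) hE')).
have -> : (n ^_ k)%:R * (s ^+ 2 * (16 / r) ^+ 2 * (r / 2) ^+ m) =
   s ^+ 2 * (16 / r) ^+ 2 * ((n ^_ k)%:R * (r / 2) ^+ m) by ring.
apply: ler_wpM2l => //; apply: mulr_ge0 => //; rewrite exprn_ge0 // divr_ge0 //; lra.
Qed.
End Coord.

Instance totally_filter' {I : choiceType} : ProperFilter (@totally I).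
Proof.
eapply filter_from_proper; last by move=> A _; exists A; rewrite /= fsubset_refl.
apply: filter_fromT_filter; first by exists fset0.
by move=> A B /=; exists (A `|` B)%fset => P /=; rewrite fsubUset => /andP[].
Qed.

Section FS.
Variables (R : realType) (I : choiceType).

Lemma psE (V : zmodType) (x : I -> V) A : partial_sum x A = \sum_(i <- A) x i.
Proof. by rewrite /partial_sum big_seq_fsetE. Qed.

Definition fbounded (f : I -> R) (M : R) :=
  forall A : {fset I}, \sum_(i <- A) f i <= M.

Lemma sum_split (V : zmodType) (x : I -> V) (A B : {fset I}) : (A `<=` B)%fset ->
  \sum_(i <- B) x i = \sum_(i <- A) x i + \sum_(i <- [fset j in B | j \notin A]%fset) x i.
Proof.
move=> AB; rewrite (big_fsetID _ (mem A)); congr (_ + _).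
apply: eq_fbigl => i; rewrite !inE /=; apply/andP/idP => [[]//|iA]; split=> //.
by move/fsubsetP: AB; apply.
Qed.

Lemma fs_cvg (X : completeNormedModType R) (x : I -> X) (f : I -> R) M :
  (forall i, `|x i| <= f i) -> fbounded f M -> cvg (partial_sum x @ totally).
Proof.
move=> xf fM.
have f0 i : 0 <= f i by apply: le_trans (xf i).
pose E := [set y | exists A : {fset I}, y = \sum_(i <- A) f i].
have hs : has_sup E.
  split; first by exists 0, fset0; rewrite big_seq_fset0.
  by exists M => y [A ->]; exact: fM.
apply/cauchy_cvgP/cauchy_exP => e e0.
have [_ [A0 ->] hA0] := sup_adherent (e0 : 0 < e) hs.
exists (partial_sum x A0); exists A0 => // B /= A0B.
rewrite -ball_normE /= !psE (sum_split x A0B) opprD addrA subrr add0r normrN.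
rewrite (le_lt_trans (ler_norm_sum _ _ _)) //.
apply: (le_lt_trans (ler_sum _ (fun i _ => xf i))).
have : \sum_(i <- B) f i <= sup E by apply: sup_upper_bound => //; exists B.
rewrite (sum_split f A0B); move: hA0; set a := \sum_(i <- A0) f i.
set b := \sum_(i <- _) f i; lra.
Qed.

Lemma fs_bound (X : normedModType R) (x : I -> X) (f : I -> R) M l :
  (forall i, `|x i| <= f i) -> fbounded f M ->
  partial_sum x @ totally --> l -> `|l| <= M.
Proof.
move=> xf fM xl.
have : (fun A => `|partial_sum x A|) @ totally --> `|l| by apply: cvg_norm.
move/cvgr_to_le; apply; apply: nearW => A /=.
rewrite psE (le_trans (ler_norm_sum _ _ _)) //.
exact: le_trans (ler_sum _ (fun i _ => xf i)) (fM A).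
Qed.

Lemma fs_lim (X : normedModType R) (x : I -> X) l :
  partial_sum x @ totally --> l -> fam_sum x = l.
Proof. by move=> h; rewrite /fam_sum; apply: cvg_lim. Qed.

Lemma fs_add (X : normedModType R) (x y : I -> X) lx ly :
  partial_sum x @ totally --> lx -> partial_sum y @ totally --> ly ->
  partial_sum (fun i => x i + y i) @ totally --> lx + ly.
Proof.
move=> hx hy.
have -> : partial_sum (fun i => x i + y i) = (fun A => partial_sum x A + partial_sum y A).
  by apply/funext => A; rewrite !psE big_split.
exact: cvgD.
Qed.

Lemma fs_scale (X : normedModType R) (x : I -> X) (c : R) lx :
  partial_sum x @ totally --> lx ->
  partial_sum (fun i => c *: x i) @ totally --> c *: lx.
Proof.
move=> hx.
have -> : partial_sum (fun i => c *: x i) = (fun A => c *: partial_sum x A).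
  by apply/funext => A; rewrite !psE scaler_sumr.
exact: cvgZr.
Qed.

Lemma fs_single (X : normedModType R) (x : I -> X) (a : I) :
  (forall i, i != a -> x i = 0) -> partial_sum x @ totally --> x a.
Proof.
move=> xa; apply: cvg_near_cst; exists [fset a]%fset => // B /= aB.
rewrite psE (big_fsetD1 _ (fsubsetP aB a (fset11 a))) /= big1_fset ?addr0 //.
by move=> i; rewrite !inE => /andP[ia _] _; apply: xa.
Qed.

Lemma fs_sub (X : normedModType R) (x y : I -> X) lx ly :
  partial_sum x @ totally --> lx -> partial_sum y @ totally --> ly ->
  partial_sum (fun i => x i - y i) @ totally --> lx - ly.
Proof.
move=> hx hy.
have -> : partial_sum (fun i => x i - y i) = (fun A => partial_sum x A - partial_sum y A).
  by apply/funext => A; rewrite !psE sumrB.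
exact: cvgB.
Qed.
End FS.

Lemma deriv_from_est (R : realType) (X : normedModType R) (f : R -> X) (L : X) (d K : R) :
  0 < d -> 0 <= K ->
  (forall t, t != 0 -> `|t| < d -> `|f t - f 0 - t *: L| <= t ^+ 2 * K) ->
  derive1 f 0 = L.
Proof.
move=> d0 K0 est; rewrite /derive1; apply: cvg_lim; first exact: norm_hausdorff.
apply/cvgrPdist_le => eps eps0.
have dd : 0 < Num.min d (eps / (K + 1)).
  by rewrite lt_min d0 divr_gt0 //; lra.
near=> t.
have t0 : t != 0 by near: t; exact: nbhs_dnbhs_neq.
have td : `|t| < Num.min d (eps / (K + 1)) by near: t; exact: dnbhs0_lt.
move: td; rewrite lt_min => /andP[td te].
rewrite addr0.
have -> : L - t^-1 *: (f t - f 0) = - (t^-1 *: (f t - f 0 - t *: L)).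
  by rewrite [in RHS]scalerBr scalerA mulVf // scale1r opprB.
rewrite normrN normrZ normfV.
have tp : 0 < `|t| by rewrite normr_gt0.
rewrite ler_pdivrMl //.
apply: le_trans (est t t0 td) _.
have -> : t ^+ 2 = `|t| * `|t| by rewrite -normrM -expr2 ger0_norm // sqr_ge0.
rewrite -mulrA; apply: ler_wpM2l; first exact: ltW.
have K1 : 0 < K + 1 by lra.
move: te; rewrite ltr_pdivlMr // => te.
nra.
Unshelve. all: by end_near.
Qed.


Section Core.
Variables (R : realType) (X : completeNormedModType R) (u : mindex -> X).
Variable (S : seq (nat * nat)).
Hypothesis Suniq : uniq S.
Variables (r M : R).
Hypothesis r0 : 0 < r.

Definition inS (b : mindex) : bool := all (fun p => p \in S) (finsupp b).
Definition Dk (k : nat * nat -> nat) (b : mindex) (h : nat * nat -> R) : R :=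
  \prod_(q <- S) phi (k q) (b q) (h q).
Definition coef k h b : R :=
  if inS b then Dk k b h / Num.sqrt (mfact b)%:R else 0.
Definition Tk k h : X := fam_sum (fun b => coef k h b *: u b).
Definition W (b : mindex) : R := \prod_(q <- S) r ^+ b q.
Definition g b : R := if inS b then W b * `|u b| / Num.sqrt (mfact b)%:R else 0.
Definition Ck (k : nat * nat -> nat) : R :=
  \prod_(q <- S) ((k q)`!%:R * (2 / r) ^+ k q).

Hypothesis gM : fbounded g M.

Lemma Cq_ge0 (k : nat * nat -> nat) q : 0 <= (k q)`!%:R * (2 / r) ^+ k q :> R.
Proof. by rewrite mulr_ge0 ?ler0n // exprn_ge0 // divr_ge0 // ltW. Qed.

Lemma Ck_ge0 k : 0 <= Ck k.
Proof. by apply: prodr_ge0 => q _; exact: Cq_ge0. Qed.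

Lemma W_ge0 b : 0 <= W b.
Proof. by apply: prodr_ge0 => q _; rewrite exprn_ge0 // ltW. Qed.

Lemma g_ge0 b : 0 <= g b.
Proof.
rewrite /g; case: inS => //; apply: mulr_ge0; last by rewrite invr_ge0 sqrtr_ge0.
by rewrite mulr_ge0 ?W_ge0.
Qed.

Lemma prod_norm_le (s : seq (nat * nat)) (P : pred (nat * nat)) (F G : nat * nat -> R) :
  (forall q, P q -> `|F q| <= G q) ->
  `|\prod_(q <- s | P q) F q| <= \prod_(q <- s | P q) G q.
Proof.
move=> FG; rewrite normr_prod; apply: ler_prod => q Pq.
by rewrite normr_ge0 FG.
Qed.

Lemma fbounded_scale (c : R) (f : mindex -> R) N :
  0 <= c -> fbounded f N -> fbounded (fun i => c * f i) (c * N).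
Proof. by move=> c0 fN A; rewrite -mulr_sumr ler_wpM2l. Qed.

Lemma coef_bound k h b : (forall q, `|h q| <= r / 2) ->
  `|coef k h b *: u b| <= Ck k * g b.
Proof.
move=> hh; rewrite /coef /g; case: inS; last first.
  by rewrite scale0r normr0 mulr0.
rewrite normrZ normrM normfV (ger0_norm (sqrtr_ge0 _)).
have hD : `|Dk k b h| <= Ck k * W b.
  rewrite /Ck /W -big_split /=; apply: prod_norm_le => q _.
  by apply: phi_bound => //; exact: hh.
have s0 : 0 <= (Num.sqrt (mfact b)%:R)^-1 :> R by rewrite invr_ge0 sqrtr_ge0.
apply: le_trans (ler_wpM2r (normr_ge0 _) (ler_wpM2r s0 hD)) _.
by rewrite le_eqVlt; apply/orP; left; apply/eqP; rewrite /W; ring.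
Qed.


Lemma Tk_cvg k h : (forall q, `|h q| <= r / 2) ->
  partial_sum (fun b => coef k h b *: u b) @ totally --> Tk k h.
Proof.
move=> hh.
have := fs_cvg (fun b => coef_bound k b hh) (fbounded_scale (Ck_ge0 k) gM).
by [].
Qed.

Definition hline (h : nat * nat -> R) (p : nat * nat) (t : R) :=
  fun q => h q + (if q == p then t else 0).
Definition kS (k : nat * nat -> nat) (p : nat * nat) :=
  fun q => (k q + (q == p))%N.

Lemma coef_rem k p h t b : p \in S -> (forall q, `|h q| <= r / 16) -> `|t| <= r / 16 ->
  `|(coef k (hline h p t) b - coef k h b - t * coef (kS k p) h b) *: u b|
    <= t ^+ 2 * (16 / r) ^+ 2 * Ck k * g b.
Proof.
move=> pS hh ht; rewrite /coef /g; case: inS; last first.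
  by rewrite subrr mulr0 subr0 scale0r normr0 mulr0.
set Pr := \prod_(q <- S | q != p) phi (k q) (b q) (h q).
have e1 : Dk k b (hline h p t) = phi (k p) (b p) (h p + t) * Pr.
  rewrite /Dk (bigD1_seq p) //=; rewrite /hline eqxx; congr (_ * _).
  by apply: eq_bigr => q /negbTE ->; rewrite addr0.
have e2 : Dk k b h = phi (k p) (b p) (h p) * Pr by rewrite /Dk (bigD1_seq p).
have e3 : Dk (kS k p) b h = phi (k p).+1 (b p) (h p) * Pr.
  rewrite /Dk (bigD1_seq p) //=; rewrite /kS eqxx addn1; congr (_ * _).
  by apply: eq_bigr => q /negbTE ->; rewrite addn0.
have -> : Dk k b (hline h p t) / Num.sqrt (mfact b)%:R - Dk k b h / Num.sqrt (mfact b)%:R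
   - t * (Dk (kS k p) b h / Num.sqrt (mfact b)%:R) =
   (phi (k p) (b p) (h p + t) - phi (k p) (b p) (h p) - t * phi (k p).+1 (b p) (h p))
   * Pr / Num.sqrt (mfact b)%:R.
  by rewrite e1 e2 e3; ring.
rewrite normrZ normrM normrM normfV (ger0_norm (sqrtr_ge0 _)).
have h16 : forall q, `|h q| <= r / 2.
  by move=> q; have := hh q; have := r0; lra.
have hP : `|Pr| <= \prod_(q <- S | q != p) ((k q)`!%:R * (2 / r) ^+ k q * r ^+ b q).
  by apply: prod_norm_le => q _; apply: phi_bound.
have hF := phi_rem (k p) (b p) r0 (hh p) ht.
have hC : Ck k * W b = ((k p)`!%:R * (2 / r) ^+ k p * r ^+ b p) *
    \prod_(q <- S | q != p) ((k q)`!%:R * (2 / r) ^+ k q * r ^+ b q).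
  by rewrite /Ck /W -big_split /= (bigD1_seq p).
have s0 : 0 <= (Num.sqrt (mfact b)%:R)^-1 :> R by rewrite invr_ge0 sqrtr_ge0.
have hFP := ler_pM (normr_ge0 _) (normr_ge0 _) hF hP.
apply: le_trans (ler_wpM2r (normr_ge0 _) (ler_wpM2r s0 hFP)) _.
rewrite le_eqVlt; apply/orP; left; apply/eqP.
have -> : t ^+ 2 * (16 / r) ^+ 2 * Ck k * (W b * `|u b| / Num.sqrt (mfact b)%:R) =
  t ^+ 2 * (16 / r) ^+ 2 * (Ck k * W b) * `|u b| / Num.sqrt (mfact b)%:R by ring.
rewrite hC.
move: (\prod_(q <- S | q != p) _) ((k p)`!%:R : R) (Num.sqrt (mfact b)%:R) `|u b| => A B C D.
move: (t ^+ 2 * (16 / r) ^+ 2) ((2 / r) ^+ k p) (r ^+ b p) => E F G.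
ring.
Qed.

Definition inB (e : R) (h : nat * nat -> R) :=
  (forall q, q \notin S -> h q = 0) /\ (forall q, `|h q| < e).

Lemma M_ge0 : 0 <= M.
Proof. by have := gM fset0; rewrite big_seq_fset0. Qed.

Lemma step k p (F : (nat * nat -> R) -> X) e : p \in S -> 0 < e ->
  (forall h, inB e h -> F h = Tk k h) ->
  forall h, inB (Num.min e (r / 32)) h -> dpartial p F h = Tk (kS k p) h.
Proof.
move=> pS e0 FT h [hS hB]; have rr0 := r0.
have hle : forall q, `|h q| < e /\ `|h q| < r / 32.
  by move=> q; have := hB q; rewrite lt_min => /andP[].
have hp := hle p.
have d0 : 0 < Num.min (e - `|h p|) (r / 32).
  by rewrite lt_min; apply/andP; split; case: hp => ? ?; have := r0; lra.
have K0 : 0 <= (16 / r) ^+ 2 * Ck k * M.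
  by rewrite mulr_ge0 ?M_ge0 // mulr_ge0 ?Ck_ge0 // exprn_ge0 // divr_ge0 // ltW.
apply: (@deriv_from_est R X (fun t => F (hline h p t)) _ _ _ d0 K0).
move=> t _ td; move: td; rewrite lt_min => /andP[td1 td2].
have inBt : forall s, `|s| < Num.min (e - `|h p|) (r / 32) -> inB e (hline h p s).
  move=> s; rewrite lt_min => /andP[s1 s2]; split.
    move=> q qS; rewrite /hline; have -> : (q == p) = false.
      by apply/negbTE; apply: contraNneq qS => ->.
    by rewrite addr0 hS.
  move=> q; rewrite /hline; case: eqP => [->|_]; last by rewrite addr0; case: (hle q).
  by apply: le_lt_trans (ler_normD _ _) _; lra.
have hl0 : hline h p 0 = h.
  by apply/funext => q; rewrite /hline; case: eqP; rewrite addr0.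
rewrite (FT _ (inBt t _)); last by rewrite lt_min td1 td2.
rewrite (FT _ (inBt 0 _)); last by rewrite normr0.
rewrite hl0.
have bt : forall q, `|hline h p t q| <= r / 2.
  move=> q; rewrite /hline; case: eqP => _; last by rewrite addr0; case: (hle q) => _ ?; lra.
  apply: le_trans (ler_normD _ _) _; case: (hle q) => _; lra.
have bh : forall q, `|h q| <= r / 2 by move=> q; case: (hle q) => _; lra.
have c1 := Tk_cvg (k:=k) bt.
have c2 := Tk_cvg (k:=k) bh.
have c3 := fs_scale (c:=t) (Tk_cvg (k:=kS k p) bh).
have c := fs_sub (fs_sub c1 c2) c3.
have cpos : 0 <= t ^+ 2 * (16 / r) ^+ 2 * Ck k.
  by rewrite mulr_ge0 ?Ck_ge0 // mulr_ge0 ?sqr_ge0 // exprn_ge0 // divr_ge0 // ltW.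
have H := fs_bound _ (fbounded_scale cpos gM) c.
apply: le_trans (H _) _; last by rewrite !mulrA.
move=> b; rewrite scalerA -!scalerBl.
have h16 : forall q, `|h q| <= r / 16 by move=> q; case: (hle q) => _; lra.
have t16 : `|t| <= r / 16 by lra.
exact: (coef_rem k b pS h16 t16).
Qed.

Lemma Tk_ext k k' h : k =1 k' -> Tk k h = Tk k' h.
Proof. by move=> kk; have -> : k = k' by apply/funext. Qed.

Lemma iter_step k p n (F : (nat * nat -> R) -> X) e : p \in S -> 0 < e ->
  (forall h, inB e h -> F h = Tk k h) ->
  exists2 e', 0 < e' & forall h, inB e' h ->
    iter n (dpartial p) F h = Tk (fun q => (k q + (if q == p then n else 0))%N) h.
Proof.
move=> pS e0 FT; elim: n => [|n [e' e'0 IH]] /=.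
  exists e => // h hB; rewrite FT // ; apply: Tk_ext => q; by case: eqP; rewrite addn0.
exists (Num.min e' (r / 32)); first by rewrite lt_min e'0 /=; have := r0; lra.
move=> h hB; rewrite (step pS e'0 IH hB); apply: Tk_ext => q.
by rewrite /kS; case: eqP => _; rewrite ?addn0 ?addn1 ?addnS.
Qed.

Lemma foldr_step (a : mindex) (F0 : (nat * nat -> R) -> X) (l : seq (nat * nat)) :
  {subset l <= S} -> uniq l ->
  (exists2 e0, 0 < e0 & forall h, inB e0 h -> F0 h = Tk (fun _ => 0%N) h) ->
  exists2 e, 0 < e & forall h, inB e h ->
    foldr (fun p G => iter (a p) (dpartial p) G) F0 l h =
    Tk (fun q => if q \in l then a q else 0%N) h.
Proof.
move=> lS ul base; elim: l lS ul => [|p l IH] lS /=.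
  by move=> _; case: base => e0 e00 H; exists e0 => // h hB; rewrite H.
move=> /andP[pl ul].
have lS' : {subset l <= S} by move=> q ql; apply: lS; rewrite inE ql orbT.
have [e e0 H] := IH lS' ul.
have [e' e'0 H'] := iter_step (a p) (lS p (mem_head p l)) e0 H.
exists e' => // h hB; rewrite H' //; apply: Tk_ext => q; rewrite inE.
case: eqP => [->|_] /=; last by rewrite addn0.
by rewrite (negbTE pl).
Qed.

Lemma prod_sub (b : mindex) (F : nat * nat -> R) : inS b ->
  (forall q, q \notin finsupp b -> F q = 1) ->
  \prod_(q <- S) F q = \prod_(q <- finsupp b) F q.
Proof.
move=> /allP bS F1.
rewrite (bigID (fun q => q \in finsupp b)) /= [X in _ * X]big1 ?mulr1; last first.
  by move=> q /F1.
rewrite -big_filter; apply: perm_big; apply: uniq_perm.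
- by rewrite filter_uniq.
- exact: fset_uniq.
by move=> q; rewrite mem_filter; apply/andP/idP => [[]//|qb]; split => //; apply: bS.
Qed.

Lemma base_eq h : (forall q, q \notin S -> h q = 0) ->
  Strans u h = Tk (fun _ => 0%N) h.
Proof.
move=> hS; rewrite /Strans /Tk; congr fam_sum; apply/funext => b; congr (_ *: _).
rewrite /coef; case: ifP => hin.
  congr (_ / _); rewrite /hpow /Dk (prod_sub hin); last first.
    by move=> q; rewrite memNfinsupp => /eqP ->; rewrite /phi ffactn0 mul1r expr0.
  apply: eq_bigr => q _; by rewrite /phi ffactn0 mul1r subn0.
have [q qb qS] : exists2 q, q \in finsupp b & q \notin S.
  by apply/allPn; move: hin; rewrite /inS => ->.
rewrite /hpow (bigD1_seq q) //= ?fset_uniq // hS // expr0n.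
move: qb; rewrite mem_finsupp => /negbTE ->; by rewrite !mul0r.
Qed.

Lemma mfact_gt0 b : (0 < mfact b)%N.
Proof. by rewrite /mfact prodn_gt0 // => q; rewrite fact_gt0. Qed.

Lemma final (a : mindex) : S = finsupp a ->
  Tk (fun q => a q) (fun _ => 0) = ((mfact a)%:R / Num.sqrt (mfact a)%:R) *: u a.
Proof.
move=> SE.
have inSa : inS a by apply/allP => q; rewrite SE.
have -> : (mfact a)%:R / Num.sqrt (mfact a)%:R = coef (fun q => a q) (fun _ => 0) a :> R.
  rewrite /coef inSa /Dk /mfact natr_prod SE; congr (_ / _).
  by apply: eq_bigr => q _; rewrite /phi ffactnn subnn expr0 mulr1.
apply: fs_lim; apply: fs_single => b ba.
rewrite /coef; case: ifP => hin; last by rewrite scale0r.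
have [q bq] : exists q, b q != a q.
  have : ~ (forall q, b q = a q).
    by move=> H; move: ba; rewrite (_ : b = a) ?eqxx //; apply/fsfunP.
  move/existsNP => [q /eqP bq]; by exists q.
have qS : q \in S.
  rewrite SE mem_finsupp; apply: contra bq => /eqP aq.
  have : q \notin finsupp b.
    apply: contraL hin => qb; apply/negP => /allP /(_ q qb).
    by rewrite SE mem_finsupp aq eqxx.
  by rewrite memNfinsupp aq.
rewrite /Dk (bigD1_seq q) //= /phi.
case: (ltngtP (b q) (a q)) => [lt|gt|eq]; last by rewrite eq eqxx in bq.
  by rewrite ffact_small // !mul0r scale0r.
by rewrite expr0n subn_eq0 leqNgt gt /= !(mulr0, mul0r) scale0r.
Qed.

End Core.

Lemma esum_fbounded (R : realType) (f : mindex -> R) : (forall b, 0 <= f b) ->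
  (\esum_(a in [set: mindex]) (f a)%:E < +oo)%E -> exists M, fbounded f M.
Proof.
move=> f0 hlt.
have e0 : (0 <= \esum_(a in [set: mindex]) (f a)%:E)%E.
  by apply: esum_ge0 => b _; rewrite lee_fin.
have fin : \esum_(a in [set: mindex]) (f a)%:E \is a fin_num by rewrite ge0_fin_numE.
exists (fine (\esum_(a in [set: mindex]) (f a)%:E)) => A.
rewrite -lee_fin fineK //; apply: esum_ge; exists [set` A].
  by split => //; exact: finite_fset.
by rewrite fsbig_finite ?finite_fset // set_fsetK sumEFin.
Qed.

Lemma geom_sum (R : realFieldType) N : \sum_(j < N) (2^-1 : R) ^+ j <= 2.
Proof.
have : \sum_(j < N) (2^-1 : R) ^+ j = 2 - 2 * (2^-1) ^+ N.
  elim: N => [|N IH]; first by rewrite big_ord0 expr0; lra.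
  by rewrite big_ord_recr /= IH exprS; field.
move=> ->; have : 0 <= (2^-1 : R) ^+ N by rewrite exprn_ge0 // invr_ge0.
lra.
Qed.

Lemma nat_le_sum (T : eqType) (s : seq T) (F : T -> nat) x : uniq s -> x \in s ->
  (F x <= \sum_(y <- s) F y)%N.
Proof. by move=> us xs; rewrite (bigD1_seq x) //= leq_addr. Qed.

Lemma geom_bound (R : realFieldType) (S : seq (nat * nat)) (A : {fset mindex}) :
  uniq S ->
  \sum_(b <- A) (if inS S b then \prod_(p <- S) (2^-1 : R) ^+ b p else 0)
    <= 2 ^+ size S.
Proof.
move=> uS.
set n := size S.
set N := (\sum_(b <- A) \sum_(p <- S) b p)%N.
have bN : forall b, b \in A -> forall p, p \in S -> (b p < N.+1)%N.
  move=> b bA p pS; rewrite ltnS.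
  have h1 := nat_le_sum (fun p => b p) uS pS.
  have h2 := nat_le_sum (fun b : mindex => \sum_(p <- S) b p) (fset_uniq A) bA.
  exact: leq_trans h1 h2.
pose phi (b : mindex) : {ffun 'I_n -> 'I_N.+1} := [ffun i : 'I_n => inord (b (nth (0, 0)%N S i))].
pose H (f : {ffun 'I_n -> 'I_N.+1}) : R := \prod_(i : 'I_n) (2^-1 : R) ^+ (f i : nat).
have H0 : forall f, 0 <= H f.
  by move=> f; apply: prodr_ge0 => i _; rewrite exprn_ge0 // invr_ge0.
have GH : forall b, b \in A -> \prod_(p <- S) (2^-1 : R) ^+ b p = H (phi b).
  move=> b bA; rewrite [LHS](big_nth (0, 0)%N) big_mkord /H.
  apply: eq_bigr => i _; rewrite ffunE /= inordK //; apply: bN => //; exact: mem_nth.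
have inj : {in [seq b <- A | inS S b] &, injective phi}.
  move=> b b'; rewrite !mem_filter => /andP[hb bA] /andP[hb' b'A] e.
  apply/fsfunP => p; have [pS|pS] := boolP (p \in S).
    have := congr1 (fun f : {ffun 'I_n -> 'I_N.+1} => (f (Ordinal (etrans (index_mem p S) pS)) : nat)) e.
    by rewrite /= !ffunE /= nth_index // !inordK // bN.
  have z : forall c, inS S c -> c p = 0%N.
    move=> c /allP hc; apply/eqP; rewrite -memNfinsupp.
    by apply: contra pS => /hc.
  by rewrite !z.
rewrite -big_mkcond /= -big_filter.
rewrite (eq_big_seq (fun b => H (phi b))); last first.
  by move=> b; rewrite mem_filter => /andP[_ bA]; exact: GH.
rewrite -(big_map phi predT H) big_uniq; last first.
  by rewrite map_inj_in_uniq // filter_uniq // fset_uniq.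
apply: (@le_trans _ _ (\sum_(f : {ffun 'I_n -> 'I_N.+1}) H f)).
  rewrite [X in _ <= X](bigID (fun f => f \in [seq phi i | i <- [seq b <- A | inS S b]])) /=.
  by rewrite lerDl sumr_ge0.
rewrite /H -(bigA_distr_bigA (fun (i : 'I_n) (j : 'I_N.+1) => (2^-1 : R) ^+ j)).
rewrite -[in X in _ <= X](card_ord n) -prodr_const.
apply: ler_prod => i _; rewrite sumr_ge0 /=; last by move=> j _; rewrite exprn_ge0 // invr_ge0.
exact: geom_sum.
Qed.

Section Summ.
Variables (R : realType) (X : completeNormedModType R) (u : mindex -> X).
Variable (S : seq (nat * nat)).
Hypothesis uS : uniq S.

Lemma amgm (w Y U : R) : 0 < w -> Y * U <= (w * U ^+ 2 + Y ^+ 2 / w) / 2.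
Proof.
move=> w0; set Z := Y ^+ 2 / w.
have hZ : Z * w = Y ^+ 2 by rewrite /Z; field; rewrite gt_eqF.
have := sqr_ge0 (w * U - Y); nra.
Qed.

Lemma g_fbounded (r : R) (w : mindex -> R) M1 :
  (forall b, 0 < w b) -> fbounded (fun b => w b * `|u b| ^+ 2) M1 ->
  (forall b, inS S b -> (W S r b) ^+ 2 / ((mfact b)%:R * w b) <= \prod_(p <- S) (2^-1 : R) ^+ b p) ->
  fbounded (g u S r) (M1 / 2 + 2 ^+ size S / 2).
Proof.
move=> w0 hM1 hrat A.
have hb : forall b, g u S r b <= w b * `|u b| ^+ 2 / 2 +
    (if inS S b then \prod_(p <- S) (2^-1 : R) ^+ b p else 0) / 2.
  move=> b; rewrite /g; case: ifP => hin; last first.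
    by rewrite mul0r addr0 mulr_ge0 ?invr_ge0 // mulr_ge0 ?sqr_ge0 // ltW.
  set Y := W S r b / Num.sqrt (mfact b)%:R.
  have -> : W S r b * `|u b| / Num.sqrt (mfact b)%:R = Y * `|u b| by rewrite /Y; ring.
  apply: le_trans (amgm Y `|u b| (w0 b)) _.
  have hY : Y ^+ 2 / w b = (W S r b) ^+ 2 / ((mfact b)%:R * w b).
    rewrite /Y expr_div_n sqr_sqrtr ?ler0n //.
    have mf0 : ((mfact b)%:R : R) != 0 by rewrite pnatr_eq0 -lt0n mfact_gt0.
    by field; rewrite mf0 gt_eqF.
  rewrite hY mulrDl; apply: lerD => //.
  by apply: ler_wpM2r; rewrite ?invr_ge0 // hrat.
apply: le_trans (ler_sum _ (fun b _ => hb b)) _.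
rewrite big_split /= -!mulr_suml; apply: lerD; apply: ler_wpM2r; rewrite ?invr_ge0 //.
exact: geom_bound.
Qed.

Lemma prod_ratio (r : R) (f : nat * nat -> R) (b : mindex) :
  (forall p, p \in S -> 0 < f p) -> (forall p, p \in S -> r ^+ 2 / f p <= 2^-1) ->
  (W S r b) ^+ 2 / \prod_(p <- S) f p ^+ b p <= \prod_(p <- S) (2^-1 : R) ^+ b p.
Proof.
move=> f0 fr.
rewrite /W -prodrXl -prodf_div big_seq [X in _ <= X]big_seq.
apply: ler_prod => p pS.
have e : (r ^+ b p) ^+ 2 / f p ^+ b p = (r ^+ 2 / f p) ^+ b p.
  by rewrite -exprM mulnC exprM expr_div_n.
rewrite e; apply/andP; split.
  by rewrite exprn_ge0 // divr_ge0 ?sqr_ge0 // ltW // f0.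
apply: lerXn2r; rewrite ?nnegrE ?invr_ge0 // ?fr //.
by rewrite divr_ge0 ?sqr_ge0 // ltW // f0.
Qed.

Lemma min_seq_pos (F : nat * nat -> R) : (forall p, p \in S -> 0 < F p) ->
  0 < \big[Num.min/1]_(p <- S) F p /\ forall p, p \in S -> \big[Num.min/1]_(p <- S) F p <= F p.
Proof.
elim: (S) => [|p s IH] hF; first by rewrite big_nil.
have [h1 h2] : 0 < \big[Num.min/1]_(p <- s) F p /\ forall q, q \in s -> \big[Num.min/1]_(p <- s) F p <= F q.
  by apply: IH => q qs; apply: hF; rewrite inE qs orbT.
rewrite big_cons; split; first by rewrite lt_min h1 hF ?mem_head.
move=> q; rewrite inE => /orP[/eqP->|qs]; first by rewrite ge_min lexx.
by rewrite ge_min h2 ?orbT.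
Qed.

End Summ.

Lemma div_le (R : realFieldType) (x P D : R) : 0 <= x -> 0 < P -> P <= D -> x / D <= x / P.
Proof.
move=> x0 P0 PD; apply: ler_wpM2l => //.
by rewrite lef_pV2 // posrE (lt_le_trans P0 PD).
Qed.

Section Cases.
Variables (R : realType) (X : completeNormedModType R) (u : mindex -> X).
Variable (S : seq (nat * nat)).
Hypothesis uS : uniq S.

Lemma case_L2Q (q : nat -> R) : (forall k, 0 < q k) -> in_L2Q q u ->
  exists r, 0 < r /\ exists M, fbounded (g u S r) M.
Proof.
move=> q0 hq.
have qp0 : forall b, 0 < qpow q b.
  by move=> b; apply: prodr_gt0 => p _; rewrite exprn_gt0.
have [M1 hM1] := esum_fbounded (f := fun a => qpow q a ^+ 2 * `|u a| ^+ 2)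
  (fun b => mulr_ge0 (sqr_ge0 _) (sqr_ge0 _)) hq.
have [r0 hr] := @min_seq_pos R S (fun p => q p.2 / 2) (fun p _ => divr_gt0 (q0 _) (ltr0Sn _ 1)).
set r := \big[Num.min/1]_(p <- S) (q p.2 / 2) in r0 hr.
exists r; split => //; exists (M1 / 2 + 2 ^+ size S / 2).
apply: (g_fbounded uS (w := fun b => qpow q b ^+ 2)) => //.
  by move=> b; rewrite exprn_gt0.
move=> b hin.
have eP : qpow q b ^+ 2 = \prod_(p <- S) (q p.2 ^+ 2) ^+ b p.
  rewrite /qpow -(prod_sub uS hin); last first.
    by move=> p; rewrite memNfinsupp => /eqP ->; rewrite expr0.
  by rewrite -prodrXl; apply: eq_bigr => p _; rewrite exprAC.
have P0 : 0 < \prod_(p <- S) (q p.2 ^+ 2) ^+ b p.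
  by apply: prodr_gt0 => p _; rewrite !exprn_gt0.
apply: le_trans (prod_ratio (f := fun p => q p.2 ^+ 2) b _ _).
- rewrite eP; apply: div_le; rewrite ?sqr_ge0 //.
  by apply: ler_peMl; [exact: ltW | rewrite ler1n mfact_gt0].
- by move=> p _; rewrite exprn_gt0.
move=> p pS; have := hr p pS; have := q0 p.2; set Q := q p.2 => Q0 rQ.
rewrite ler_pdivrMr ?exprn_gt0 //; nra.
Qed.

Lemma case_S (rho gamma : R) : 0 <= rho <= 1 -> 0 <= gamma -> in_S rho gamma u ->
  exists r, 0 < r /\ exists M, fbounded (g u S r) M.
Proof.
move=> /andP[rho0 rho1] g0 hS.
have mf1 : forall b, 1 <= ((mfact b)%:R : R) by move=> b; rewrite ler1n mfact_gt0.
have c1 : forall p : nat * nat, 1 <= ((2 * p.1.+1 * p.2.+1)%:R : R).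
  by move=> p; rewrite ler1n !muln_gt0.
have cg1 : forall p : nat * nat, 1 <= ((2 * p.1.+1 * p.2.+1)%:R : R) `^ gamma.
  by move=> p; have := ler_powR (c1 p) g0; rewrite powRr0.
have cpos : forall p : nat * nat, 0 < ((2 * p.1.+1 * p.2.+1)%:R : R) `^ (- gamma).
  by move=> p; rewrite powR_gt0 // (lt_le_trans ltr01 (c1 p)).
have Sw0 : forall b, 0 < Sweight gamma b.
  by move=> b; apply: prodr_gt0 => p _; rewrite exprn_gt0.
have w0 : forall b, 0 < ((mfact b)%:R : R) `^ (- rho) * Sweight gamma b.
  by move=> b; rewrite mulr_gt0 // powR_gt0 // (lt_le_trans ltr01 (mf1 b)).
have [M1 hM1] := esum_fbounded
  (f := fun a => ((mfact a)%:R : R) `^ (- rho) * Sweight gamma a * `|u a| ^+ 2)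
  (fun b => mulr_ge0 (ltW (w0 b)) (sqr_ge0 _)) hS.
have Fpos : forall p, p \in S -> 0 < (2 * ((2 * p.1.+1 * p.2.+1)%:R : R) `^ gamma)^-1.
  by move=> p _; rewrite invr_gt0 mulr_gt0 // (lt_le_trans ltr01 (cg1 p)).
have [r0 hr] := @min_seq_pos R S _ Fpos.
set r := \big[Num.min/1]_(p <- S) _ in r0 hr.
exists r; split => //; exists (M1 / 2 + 2 ^+ size S / 2).
apply: (g_fbounded uS (w := fun b => ((mfact b)%:R : R) `^ (- rho) * Sweight gamma b)) => //.
move=> b hin.
have eP : Sweight gamma b = \prod_(p <- S) (((2 * p.1.+1 * p.2.+1)%:R : R) `^ (- gamma)) ^+ b p.
  rewrite /Sweight -(prod_sub uS hin) //.
  by move=> p; rewrite memNfinsupp => /eqP ->; rewrite expr0.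
apply: le_trans (prod_ratio (f := fun p => ((2 * p.1.+1 * p.2.+1)%:R : R) `^ (- gamma)) b _ _).
- rewrite -eP; apply: div_le; rewrite ?sqr_ge0 //.
  rewrite mulrA; apply: ler_peMl; first exact: ltW (Sw0 b).
  have h1 : ((mfact b)%:R : R) `^ (-1) <= ((mfact b)%:R : R) `^ (- rho).
    by apply: ler_powR => //; lra.
  rewrite powR_inv1 ?(le_trans ler01 (mf1 b)) // in h1.
  have mf0 : ((mfact b)%:R : R) != 0 by rewrite gt_eqF // (lt_le_trans ltr01 (mf1 b)).
  by have := ler_wpM2l (le_trans ler01 (mf1 b)) h1; rewrite mulfV.
- by move=> p _.
move=> p pS; have := hr p pS; have := cg1 p.
rewrite powRN invrK.
set C := ((2 * p.1.+1 * p.2.+1)%:R : R) `^ gamma => C1 rC.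
have C0 : 0 < 2 * C by lra.
move: rC; rewrite -[X in _ <= X]div1r ler_pdivlMr // => rC.
nra.
Qed.
End Cases.

End Helpers.
Import Helpers.

Theorem proposition7p12 (R : realType) (X : completeNormedModType R)
  (u : mindex -> X) :
  ((exists q : nat -> R, (forall k, 0 < q k) /\ in_L2Q q u) \/
   (exists rho : R, 0 <= rho <= 1 /\
      exists gamma : R, 0 <= gamma /\ in_S rho gamma u)) ->
  forall a : mindex,
    u a = (Num.sqrt ((mfact a)%:R))^-1 *: Dalpha a (Strans u) (fun _ => 0).
Proof.
move=> H a.
set S : seq (nat * nat) := finsupp a.
have uS : uniq S by exact: fset_uniq.
have [r [r0 [M gM]]] : exists r : R, 0 < r /\ exists M, fbounded (g u S r) M.
  case: H => [[q [q0 hq]]|[rho [hrho [gamma [g0 hg]]]]].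
    exact: case_L2Q.
  exact: case_S hg.
have base : exists2 e0 : R, 0 < e0 &
    forall h, inB S e0 h -> Strans u h = Tk u S (fun _ => 0%N) h.
  by exists 1 => // h [hS _]; exact: base_eq.
have [e e0 He] := foldr_step uS r0 gM a (l := S) (fun q qS => qS) uS base.
have h0 : inB S e (fun _ => 0) by split => // q; rewrite normr0.
rewrite /Dalpha -/S (He _ h0).
have -> : Tk u S (fun q => if q \in S then a q else 0%N) (fun _ => 0) =
    Tk u S (fun q => a q) (fun _ => 0).
  apply: Tk_ext => q; case: ifP => // /negbT; rewrite memNfinsupp => /eqP -> //.
rewrite (final u uS (a := a) (erefl _)) scalerA.
have mf0 : 0 < ((mfact a)%:R : R) by rewrite ltr0n mfact_gt0.
have sq0 : Num.sqrt ((mfact a)%:R : R) != 0 by rewrite gt_eqF // sqrtr_gt0.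
have -> : (Num.sqrt ((mfact a)%:R : R))^-1 * ((mfact a)%:R / Num.sqrt (mfact a)%:R) = 1.
  rewrite -{2}(sqr_sqrtr (ltW mf0)) expr2; by field.
by rewrite scale1r.
Qed.
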